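(* Consider the system $\dot x=-\nabla\psi(x)+Jx+Bu$ on $\mathbb R^n$, where $\psi:\mathbb R^n\to\mathbb R$ is continuously differentiable and strictly convex with $\lim_{\|x\|\to\infty}\psi(x)/\|x\|=\infty$, $J\in\mathbb R^{n\times n}$ is skew-symmetric, $B\in\mathbb R^{n\times m}$, and the input $u\in\mathbb R^m$ is constant. Then there exists a unique point $x_0\in\mathbb R^n$ (depending on $u$) such that every solution $x(t)$ of the system converges to $x_0$ as $t\to\infty$. *)

(* Defs.v *)
From Stdlib Require Import Reals.
From mathcomp Require Import ssreflect ssrfun ssrbool eqtype ssrnat seq fintype bigop.
Set Implicit Arguments. Unset Strict Implicit. Unset Printing Implicit Defensive.
Open Scope R_scope.

Definition vec (n : nat) := 'I_n -> R.
Definition mat (n m : nat) := 'I_n -> 'I_m -> R.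

Definition vdot {n} (x y : vec n) : R := \big[Rplus/0]_(i < n) (x i * y i).
Definition vnorm {n} (x : vec n) : R := sqrt (vdot x x).
Definition vadd {n} (x y : vec n) : vec n := fun i => x i + y i.
Definition vsub {n} (x y : vec n) : vec n := fun i => x i - y i.
Definition vscale {n} (a : R) (x : vec n) : vec n := fun i => a * x i.
Definition mxv {n m} (A : mat n m) (v : vec m) : vec n :=
  fun i => \big[Rplus/0]_(j < m) (A i j * v j).

Definition has_gradient {n} (f : vec n -> R) (x g : vec n) : Prop :=
  forall eps, 0 < eps -> exists delta, 0 < delta /\
    forall h : vec n, vnorm h < delta ->
      Rabs (f (vadd x h) - f x - vdot g h) <= eps * vnorm h.

Definition vcontinuous {n} (F : vec n -> vec n) : Prop :=
  forall x eps, 0 < eps -> exists delta, 0 < delta /\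
    forall y, vnorm (vsub y x) < delta -> vnorm (vsub (F y) (F x)) < eps.

Definition C1_with_gradient {n} (f : vec n -> R) (grad : vec n -> vec n) : Prop :=
  (forall x, has_gradient f x (grad x)) /\ vcontinuous grad.

Definition strictly_convex {n} (f : vec n -> R) : Prop :=
  forall x y : vec n, x <> y -> forall l, 0 < l < 1 ->
    f (vadd (vscale l x) (vscale (1 - l) y)) < l * f x + (1 - l) * f y.

Definition superlinear {n} (f : vec n -> R) : Prop :=
  forall M, exists r, 0 <= r /\ forall x, r < vnorm x -> M < f x / vnorm x.

Definition skew {n} (J : mat n n) : Prop := forall i j, J i j = - J j i.

Definition is_solution {n m} (grad : vec n -> vec n) (J : mat n n) (B : mat n m)
    (u : vec m) (t0 : R) (x : R -> vec n) : Prop :=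
  forall t, t0 < t -> forall i : 'I_n,
    derivable_pt_lim (fun s => x s i) t (- grad (x t) i + mxv J (x t) i + mxv B u i).

Definition converges_to {n} (x : R -> vec n) (x0 : vec n) : Prop :=
  forall eps, 0 < eps -> exists T, forall t, T <= t -> vnorm (vsub (x t) x0) < eps.

(* Main.v *)
Require Import Defs.
From Stdlib Require Import Reals Lra Lia.
From Stdlib Require Import ClassicalEpsilon FunctionalExtensionality Classical.
From HB Require Import structures.
From mathcomp Require Import ssreflect ssrfun ssrbool eqtype ssrnat seq fintype bigop.
From mathcomp Require Import zify.
Set Warnings "-notation-overridden -redundant-canonical-projection".
Set Implicit Arguments. Unset Strict Implicit.
Open Scope R_scope.
HB.instance Definition _ := Monoid.isComLaw.Build R 0 Rplus
  (fun a b c : R => esym (Rplus_assoc a b c)) Rplus_comm Rplus_0_l.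

Notation "\S_( i < n ) F" := (\big[Rplus/0]_(i < n) F) (at level 41, F at level 41, i, n at level 50).

Lemma sumD n (F G : 'I_n -> R) :
  \S_(i < n) (F i + G i) = \S_(i < n) F i + \S_(i < n) G i.
Proof. by rewrite big_split. Qed.

Lemma sumZ n a (F : 'I_n -> R) : \S_(i < n) (a * F i) = a * \S_(i < n) F i.
Proof.
apply: (big_rec2 (fun x y => x = a * y)); first by ring.
by move=> i x y _ ->; ring.
Qed.

Lemma sumZr n a (F : 'I_n -> R) : \S_(i < n) (F i * a) = (\S_(i < n) F i) * a.
Proof.
apply: (big_rec2 (fun x y => x = y * a)); first by ring.
by move=> i x y _ ->; ring.
Qed.

Lemma sumN n (F : 'I_n -> R) : \S_(i < n) (- F i) = - \S_(i < n) F i.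
Proof.
apply: (big_rec2 (fun x y => x = - y)); first by ring.
by move=> i x y _ ->; ring.
Qed.

Lemma sum_le n (F G : 'I_n -> R) : (forall i, F i <= G i) ->
  \S_(i < n) F i <= \S_(i < n) G i.
Proof.
move=> H; apply: (big_rec2 (fun x y => x <= y)); first lra.
move=> i x y _ Hxy; have := H i; lra.
Qed.

Lemma sum_ge0 n (F : 'I_n -> R) : (forall i, 0 <= F i) -> 0 <= \S_(i < n) F i.
Proof.
move=> H; apply: (big_ind (fun x => 0 <= x)); first lra.
- move=> x y; lra.
- by move=> i _; apply: H.
Qed.

Lemma sum_term n (F : 'I_n -> R) j : (forall i, 0 <= F i) -> F j <= \S_(i < n) F i.
Proof.
move=> H; rewrite (bigD1 j) //=.
rewrite -{1}(Rplus_0_r (F j)); apply: Rplus_le_compat_l.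
apply: (big_ind (fun x => 0 <= x)); first lra.
- move=> x y; lra.
- by move=> i _; apply: H.
Qed.

Lemma sum_const n c : \S_(i < n) c = INR n * c.
Proof.
rewrite big_const_ord; elim: n => [|n IH]; first by rewrite /=; ring.
rewrite S_INR /= IH; ring.
Qed.

Lemma vdotC n (x y : vec n) : vdot x y = vdot y x.
Proof. by apply: eq_bigr => i _; ring. Qed.

Lemma vdot_addl n (x y z : vec n) : vdot (vadd x y) z = vdot x z + vdot y z.
Proof. rewrite /vdot -sumD; apply: eq_bigr => i _; rewrite /vadd; ring. Qed.

Lemma vdot_subl n (x y z : vec n) : vdot (vsub x y) z = vdot x z - vdot y z.
Proof.
rewrite /vdot /Rminus -sumN -sumD; apply: eq_bigr => i _; rewrite /vsub; ring.
Qed.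

Lemma vdot_scalel n a (x z : vec n) : vdot (vscale a x) z = a * vdot x z.
Proof. rewrite /vdot -sumZ; apply: eq_bigr => i _; rewrite /vscale; ring. Qed.

Lemma vdot_addr n (x y z : vec n) : vdot z (vadd x y) = vdot z x + vdot z y.
Proof. by rewrite vdotC vdot_addl (vdotC x) (vdotC y). Qed.
Lemma vdot_subr n (x y z : vec n) : vdot z (vsub x y) = vdot z x - vdot z y.
Proof. by rewrite vdotC vdot_subl (vdotC x) (vdotC y). Qed.
Lemma vdot_scaler n a (x z : vec n) : vdot z (vscale a x) = a * vdot z x.
Proof. by rewrite vdotC vdot_scalel (vdotC x). Qed.

Lemma vdot_ge0 n (x : vec n) : 0 <= vdot x x.
Proof. apply: sum_ge0 => i; nra. Qed.

Lemma vdot_coord n (x : vec n) i : x i * x i <= vdot x x.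
Proof. apply: (@sum_term _ (fun i => x i * x i)) => j; nra. Qed.

Lemma vdot_eq0 n (x : vec n) : vdot x x = 0 -> forall i, x i = 0.
Proof. move=> H i; have := vdot_coord x i; rewrite H => Hi; nra. Qed.

Lemma vnorm_ge0 n (x : vec n) : 0 <= vnorm x.
Proof. exact: sqrt_pos. Qed.

Lemma vnorm_sq n (x : vec n) : vnorm x * vnorm x = vdot x x.
Proof. by rewrite /vnorm sqrt_sqrt //; apply: vdot_ge0. Qed.

Lemma vnorm_coord n (x : vec n) i : Rabs (x i) <= vnorm x.
Proof.
rewrite /vnorm -sqrt_Rsqr_abs; apply: sqrt_le_1_alt.
rewrite /Rsqr; exact: vdot_coord.
Qed.

Lemma CS n (x y : vec n) : Rabs (vdot x y) <= vnorm x * vnorm y.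
Proof.
have Hx := vnorm_ge0 x; have Hy := vnorm_ge0 y.
apply: Rsqr_incr_0_var; last by apply: Rmult_le_pos.
rewrite /Rsqr -Rabs_mult Rabs_pos_eq; last nra.
have -> : vnorm x * vnorm y * (vnorm x * vnorm y) = vdot x x * vdot y y.
  rewrite -!vnorm_sq; ring.
have Hyy := vdot_ge0 y; have Hxx := vdot_ge0 x.
case: (Req_dec (vdot y y) 0) => Hy0.
- have -> : vdot x y = 0.
    rewrite /vdot big1 // => i _; rewrite (vdot_eq0 Hy0 i); ring.
  nra.
- set t := vdot x y / vdot y y.
  have := vdot_ge0 (vsub x (vscale t y)).
  rewrite !vdot_subl !vdot_subr !vdot_scalel !vdot_scaler (vdotC y x).
  have Ht : t * vdot y y = vdot x y by rewrite /t; field.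
  move=> H.
  have : 0 <= vdot y y * (vdot x x - 2 * t * vdot x y + t * (t * vdot y y)).
    apply: Rmult_le_pos => //; lra.
  have -> : vdot y y * (vdot x x - 2 * t * vdot x y + t * (t * vdot y y)) =
     vdot y y * vdot x x - 2 * (t * vdot y y) * vdot x y + (t * vdot y y) * (t * vdot y y) by ring.
  rewrite Ht; nra.
Qed.

Lemma norm_le n (x : vec n) c : 0 <= c -> vdot x x <= c * c -> vnorm x <= c.
Proof.
move=> Hc H; rewrite /vnorm -(sqrt_square c) //; exact: sqrt_le_1_alt.
Qed.

Lemma norm_lt n (x : vec n) c : 0 <= c -> vdot x x < c * c -> vnorm x < c.
Proof.
move=> Hc H; rewrite /vnorm -(sqrt_square c) //; apply: sqrt_lt_1_alt; split => //.
exact: vdot_ge0.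
Qed.

Lemma vdot_le_norm n (x y : vec n) : vdot x y <= vnorm x * vnorm y.
Proof. have := CS x y; have := Rle_abs (vdot x y); lra. Qed.

Lemma vnorm_tri n (x y : vec n) : vnorm (vadd x y) <= vnorm x + vnorm y.
Proof.
have Hx := vnorm_ge0 x; have Hy := vnorm_ge0 y.
apply: norm_le; first lra.
rewrite !vdot_addl !vdot_addr (vdotC y x) -!vnorm_sq.
have := vdot_le_norm x y; nra.
Qed.

Lemma vnorm_scale n a (x : vec n) : vnorm (vscale a x) = Rabs a * vnorm x.
Proof.
apply: Rle_antisym.
- apply: norm_le; first by apply: Rmult_le_pos; [apply: Rabs_pos|apply: vnorm_ge0].
  rewrite vdot_scalel vdot_scaler -vnorm_sq.
  have : a * a = Rabs a * Rabs a by rewrite -Rabs_mult Rabs_pos_eq; nra.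
  nra.
- have Hs := vnorm_ge0 (vscale a x).
  have Hx := vnorm_ge0 x.
  have Ha := Rabs_pos a.
  have E : vnorm (vscale a x) * vnorm (vscale a x) = (Rabs a * vnorm x) * (Rabs a * vnorm x).
    rewrite vnorm_sq vdot_scalel vdot_scaler -vnorm_sq.
    have : a * a = Rabs a * Rabs a by rewrite -Rabs_mult Rabs_pos_eq; nra.
    nra.
  nra.
Qed.

Lemma vsub_add n (x y z : vec n) : vsub x z = vadd (vsub x y) (vsub y z).
Proof. apply: functional_extensionality => i; rewrite /vsub /vadd; ring. Qed.

Lemma vnorm_subC n (x y : vec n) : vnorm (vsub x y) = vnorm (vsub y x).
Proof.
have -> : vsub x y = vscale (-1) (vsub y x).
  apply: functional_extensionality => i; rewrite /vsub /vscale; ring.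
rewrite vnorm_scale Rabs_Ropp Rabs_R1; ring.
Qed.

Lemma vnorm_sub_tri n (x y z : vec n) :
  vnorm (vsub x z) <= vnorm (vsub x y) + vnorm (vsub y z).
Proof. rewrite (vsub_add x y z); exact: vnorm_tri. Qed.

Lemma vnorm_sub_le n (x y : vec n) : vnorm x <= vnorm (vsub x y) + vnorm y.
Proof.
have -> : x = vadd (vsub x y) y.
  apply: functional_extensionality => i; rewrite /vsub /vadd; ring.
have -> : vsub (vadd (vsub x y) y) y = vsub x y.
  apply: functional_extensionality => i; rewrite /vsub /vadd; ring.
exact: vnorm_tri.
Qed.

Lemma vnorm_eq0 n (x : vec n) : vnorm x = 0 -> x = (fun _ => 0).
Proof.
move=> H; apply: functional_extensionality => i; apply: vdot_eq0.
by rewrite -vnorm_sq H; ring.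
Qed.

Lemma vnorm_coords n (x : vec n) d : 0 <= d -> (forall i, Rabs (x i) <= d) ->
  vdot x x <= INR n * (d * d).
Proof.
move=> Hd H; rewrite /vdot -sum_const; apply: sum_le => i.
have := H i; have := Rabs_pos (x i).
have -> : x i * x i = Rabs (x i) * Rabs (x i) by rewrite -Rabs_mult Rabs_pos_eq; nra.
nra.
Qed.

Lemma mxv_sub n m (A : mat n m) x y : mxv A (vsub x y) = vsub (mxv A x) (mxv A y).
Proof.
apply: functional_extensionality => i; rewrite /mxv /vsub /Rminus -sumN -sumD.
apply: eq_bigr => j _; ring.
Qed.

Lemma mxv_scale n m (A : mat n m) a x : mxv A (vscale a x) = vscale a (mxv A x).
Proof.
apply: functional_extensionality => i; rewrite /mxv /vscale -sumZ.
apply: eq_bigr => j _; ring.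
Qed.

Lemma skew_adj n (J : mat n n) x y : skew J -> vdot x (mxv J y) = - vdot (mxv J x) y.
Proof.
move=> HJ; rewrite /vdot /mxv.
have -> : \S_(i < n) (x i * \S_(j < n) (J i j * y j)) =
          \S_(i < n) \S_(j < n) (x i * J i j * y j).
  apply: eq_bigr => i _; rewrite -sumZ; apply: eq_bigr => j _; ring.
have -> : \S_(i < n) ((\S_(j < n) (J i j * x j)) * y i) =
          \S_(i < n) \S_(j < n) (J i j * x j * y i).
  apply: eq_bigr => i _; rewrite -sumZr; apply: eq_bigr => j _; ring.
rewrite exchange_big -sumN; apply: eq_bigr => i _; rewrite -sumN.
apply: eq_bigr => j _; rewrite (HJ j i); ring.
Qed.

Lemma skew_self n (J : mat n n) x : skew J -> vdot x (mxv J x) = 0.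
Proof. move=> HJ; have := skew_adj x x HJ; rewrite (vdotC (mxv J x)); lra. Qed.

Ltac vext := apply: functional_extensionality => ?; rewrite /vadd /vsub /vscale; ring.

Lemma vdot0r n (x : vec n) : vdot x (fun _ => 0) = 0.
Proof. rewrite /vdot big1 // => i _; ring. Qed.

Lemma grad_ineq n (phi : vec n -> R) g x y :
  (forall z, has_gradient phi z (g z)) -> strictly_convex phi ->
  phi x + vdot (g x) (vsub y x) <= phi y.
Proof.
move=> Hg Hc.
case: (classic (y = x)) => [->|Hyx].
  have -> : vsub x x = (fun _ => 0) by vext.
  rewrite vdot0r; lra.
set h := vsub y x.
apply: Rnot_lt_le => Hlt.
set gap := phi x + vdot (g x) h - phi y.
have Hgap : 0 < gap by rewrite /gap; lra.
have Hh := vnorm_ge0 h.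
set eps := gap / (2 * (vnorm h + 1)).
have Heps : 0 < eps by rewrite /eps; apply: Rdiv_lt_0_compat; lra.
have [delta [Hd Hdel]] := Hg x eps Heps.
set l := Rmin (1/2) (delta / (2 * (vnorm h + 1))).
have Hl0 : 0 < l.
  rewrite /l; apply: Rmin_pos; first lra.
  apply: Rdiv_lt_0_compat; lra.
have Hl1 : l < 1 by rewrite /l; have := Rmin_l (1/2) (delta / (2 * (vnorm h + 1))); lra.
have Hl2 : l * vnorm h < delta.
  have : l <= delta / (2 * (vnorm h + 1)) by apply: Rmin_r.
  move=> Hle.
  have : delta / (2 * (vnorm h + 1)) * vnorm h < delta.
    rewrite /Rdiv; apply: (Rle_lt_trans _ (delta * / 2)); last lra.
    rewrite Rmult_assoc; apply: Rmult_le_compat_l; first lra.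
    apply: (Rmult_le_reg_l (2 * (vnorm h + 1))); first lra.
    field_simplify; lra.
  nra.
have Hc' := Hc y x Hyx l (conj Hl0 Hl1).
have E : vadd (vscale l y) (vscale (1 - l) x) = vadd x (vscale l h) by rewrite /h; vext.
rewrite E in Hc'.
have := Hdel (vscale l h).
rewrite vnorm_scale Rabs_pos_eq; last lra.
move=> /(_ Hl2).
rewrite vdot_scaler => Hb.
have Hb2 := Rle_abs (- (phi (vadd x (vscale l h)) - phi x - l * vdot (g x) h)).
rewrite Rabs_Ropp in Hb2.
(* l * <g,h> - eps*l*|h| <= phi(x+lh) - phi x <= l (phi y - phi x) *)
have Hk : l * (vdot (g x) h - (phi y - phi x)) <= eps * (l * vnorm h) by lra.
have Hk2 : vdot (g x) h - (phi y - phi x) <= eps * vnorm h.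
  apply: (Rmult_le_reg_l l) => //; lra.
have : eps * vnorm h < gap.
  rewrite /eps /Rdiv.
  have -> : gap * / (2 * (vnorm h + 1)) * vnorm h = gap * (vnorm h / (2 * (vnorm h + 1))) by field; lra.
  have : vnorm h / (2 * (vnorm h + 1)) < 1.
    apply: (Rmult_lt_reg_r (2 * (vnorm h + 1))); first lra.
    field_simplify; lra.
  move=> H1; have : 0 <= vnorm h / (2 * (vnorm h + 1)).
    apply: Rle_mult_inv_pos; lra.
  nra.
rewrite /gap in Hgap *; lra.
Qed.

Lemma grad_ineq_strict n (phi : vec n -> R) g x y :
  (forall z, has_gradient phi z (g z)) -> strictly_convex phi -> y <> x ->
  phi x + vdot (g x) (vsub y x) < phi y.
Proof.
move=> Hg Hc Hyx.
set m := vadd (vscale (1/2) y) (vscale (1 - 1/2) x).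
have H1 := Hc y x Hyx (1/2) ltac:(lra).
have H2 := grad_ineq x m Hg Hc.
have E : vsub m x = vscale (1/2) (vsub y x) by rewrite /m; vext.
rewrite E vdot_scaler in H2.
fold m in H1; lra.
Qed.

Lemma strict_mono n (phi : vec n -> R) g x y :
  (forall z, has_gradient phi z (g z)) -> strictly_convex phi -> x <> y ->
  0 < vdot (vsub (g x) (g y)) (vsub x y).
Proof.
move=> Hg Hc Hxy.
have H1 := grad_ineq_strict Hg Hc (nesym Hxy).
have H2 := grad_ineq_strict (x:=y) (y:=x) Hg Hc Hxy.
move: H1 H2; rewrite !vdot_subl !vdot_subr; lra.
Qed.

Lemma phi_cont n (phi : vec n -> R) g x eps :
  (forall z, has_gradient phi z (g z)) -> 0 < eps ->
  exists delta, 0 < delta /\ forall y, vnorm (vsub y x) < delta -> Rabs (phi y - phi x) < eps.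
Proof.
move=> Hg He.
have [d1 [Hd1 H]] := Hg x 1 Rlt_0_1.
have Hgn := vnorm_ge0 (g x).
exists (Rmin d1 (eps / (vnorm (g x) + 2))); split.
  apply: Rmin_pos => //; apply: Rdiv_lt_0_compat; lra.
move=> y Hy.
have Hy1 : vnorm (vsub y x) < d1 by have := Rmin_l d1 (eps / (vnorm (g x) + 2)); lra.
have Hy2 : vnorm (vsub y x) < eps / (vnorm (g x) + 2) by have := Rmin_r d1 (eps / (vnorm (g x) + 2)); lra.
have := H _ Hy1.
have -> : vadd x (vsub y x) = y by vext.
move=> Hb.
have Hcs := CS (g x) (vsub y x).
have Hn := vnorm_ge0 (vsub y x).
have : (vnorm (g x) + 2) * vnorm (vsub y x) < eps.
  have Hc2 : 0 < vnorm (g x) + 2 by lra.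
  have := Rmult_lt_compat_l _ _ _ Hc2 Hy2.
  rewrite (_ : (vnorm (g x) + 2) * (eps / (vnorm (g x) + 2)) = eps) //; field; lra.
move=> Hlt.
move: Hb Hcs; set a := phi y - phi x; set b := vdot (g x) (vsub y x).
move=> Hb Hcs.
have : Rabs a <= Rabs (a - b) + Rabs b.
  have -> : a = (a - b) + b by ring.
  have -> : a - b + b - b = a - b by ring.
  exact: Rabs_triang.
move: (Rabs_pos b) => ?; nra.
Qed.

Lemma grad_at_min n (phi : vec n -> R) g w x :
  (forall z, has_gradient phi z (g z)) ->
  (forall y, phi x - vdot w x <= phi y - vdot w y) -> g x = w.
Proof.
move=> Hg Hmin.
set d := vsub w (g x).
suff : d = (fun _ => 0).
  move=> Hd; apply: functional_extensionality => i.
  have := f_equal (fun v => v i) Hd; rewrite /d /vsub /=; lra.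
apply: vnorm_eq0.
have Hd0 := vnorm_ge0 d.
apply: Rle_antisym => //; apply: Rnot_lt_le => Hpos.
have [delta [Hdel H]] := Hg x (vnorm d / 2) ltac:(lra).
set t := delta / (2 * (vnorm d + 1)).
have Ht : 0 < t by rewrite /t; apply: Rdiv_lt_0_compat; lra.
have Htd : t * vnorm d < delta.
  have : t * (vnorm d + 1) = delta / 2 by rewrite /t; field; lra.
  nra.
have := H (vscale t d).
rewrite vnorm_scale Rabs_pos_eq; last lra.
move=> /(_ Htd) Hb.
have Hm := Hmin (vadd x (vscale t d)).
rewrite vdot_addr vdot_scaler in Hm.
rewrite vdot_scaler in Hb.
have Hb2 := Rle_abs (phi (vadd x (vscale t d)) - phi x - t * vdot (g x) d).
have Edd : vdot d d = vdot w d - vdot (g x) d by rewrite /d vdot_subl; rewrite vdotC (vdotC (g x)).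
have Hsq := vnorm_sq d.
(* t*<w,d> <= phi(x+td) - phi x <= t <g,d> + |d|/2 * t |d| *)
have : t * (vdot w d - vdot (g x) d) <= vnorm d / 2 * (t * vnorm d) by lra.
rewrite -Edd -Hsq => HH; have := Rmult_lt_0_compat _ _ Ht (Rmult_lt_0_compat _ _ Hpos Hpos); lra.
Qed.

Lemma my_choice (A B : Type) (P : A -> B -> Prop) :
  (forall a, exists b, P a b) -> exists f : A -> B, forall a, P a (f a).
Proof.
move=> H; exists (fun a => proj1_sig (constructive_indefinite_description _ (H a))).
move=> a; exact: (proj2_sig (constructive_indefinite_description _ (H a))).
Qed.

Lemma inv_small eps : 0 < eps -> exists N : nat, forall k : nat, (N <= k)%N -> / (INR k + 1) < eps.
Proof.
move=> He; have [N [HN HN0]] := archimed_cor1 eps He.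
exists N => k Hk.
have HNk : INR N <= INR k by apply: le_INR; lia.
have HN0' : 0 < INR N by apply: lt_0_INR; lia.
apply: (Rle_lt_trans _ (/ INR N)) => //.
apply: Rinv_le_contravar => //; lra.
Qed.

Definition incr (s : nat -> nat) := forall k, (s k < s k.+1)%N.

Lemma incr_mono s a b : incr s -> (a < b)%N -> (s a < s b)%N.
Proof.
move=> Hs; elim: b => [|b IH] //= Hab.
case: (ltnP a b) => H.
- have := IH H; have := Hs b; lia.
- have -> : a = b by lia.
  exact: Hs.
Qed.

Lemma incr_ge s k : incr s -> (k <= s k)%N.
Proof. move=> Hs; elim: k => [|k IH] //; have := Hs k; lia. Qed.

Lemma BW1 (u : nat -> R) M : (forall k, Rabs (u k) <= M) ->
  exists s l, incr s /\
    forall eps, 0 < eps -> exists N, forall k, (N <= k)%N -> Rabs (u (s k) - l) < eps.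
Proof.
move=> Hu.
have Hb : forall k, -M <= u k <= M.
  move=> k; have := Hu k; have := Rle_abs (u k); have := Rle_abs (- u k); rewrite Rabs_Ropp; lra.
have [l Hl] := @Bolzano_Weierstrass u (fun c => -M <= c <= M) (compact_P3 (-M) M) Hb.
have Hp : forall N k, exists p, (N <= p)%N /\ Rabs (u p - l) < / (INR k + 1).
  move=> N k.
  have Hk : 0 < / (INR k + 1) by apply: Rinv_0_lt_compat; have := pos_INR k; lra.
  have Hn : neighbourhood (fun y => Rabs (y - l) < / (INR k + 1)) l.
    by exists (mkposreal _ Hk) => y Hy.
  have [p [Hp1 Hp2]] := Hl (fun y => Rabs (y - l) < / (INR k + 1)) N Hn.
  exists p; split => //; apply/leP.
  exact: Hp1.
have [pk Hpk] := @my_choice _ _ (fun (Nk : nat * nat) p => (Nk.1 <= p)%N /\ Rabs (u p - l) < / (INR Nk.2 + 1))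
  (fun Nk => Hp Nk.1 Nk.2).
pose s := fix s k := match k with 0 => pk (0, 0)%N | S k' => pk ((s k').+1, k) end.
exists s, l; split.
- move=> k; rewrite /=; exact: (proj1 (Hpk ((s k).+1, k.+1))).
- move=> eps He; have [N HN] := inv_small He; exists N => k Hk.
  have : Rabs (u (s k) - l) < / (INR k + 1).
    case: k Hk => [|k] Hk /=.
    + exact: (proj2 (Hpk (0, 0)%N)).
    + exact: (proj2 (Hpk ((s k).+1, k.+1))).
  have := HN k Hk; lra.
Qed.

Definition vcv n (y : nat -> vec n) (l : vec n) :=
  forall eps, 0 < eps -> exists N, forall k, (N <= k)%N -> vnorm (vsub (y k) l) < eps.

Lemma BWn n (y : nat -> vec n) M : (forall k, vnorm (y k) <= M) ->
  exists s l, incr s /\ vcv (fun k => y (s k)) l.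
Proof.
move=> Hy.
have P : forall K, exists s (l : vec n), incr s /\ forall eps, 0 < eps -> exists N,
    forall k, (N <= k)%N -> forall i : 'I_n, (i < K)%N -> Rabs (y (s k) i - l i) < eps.
  elim=> [|K [s [l [Hs Hl]]]].
    exists id, (fun _ => 0); split; first by move=> k /=.
    by move=> eps He; exists 0%N => k _ i.
  case: (ltnP K n) => HK; last first.
    exists s, l; split => // eps He; have [N HN] := Hl eps He.
    exists N => k Hk i Hi; apply: HN => //; have := ltn_ord i; lia.
  pose iK : 'I_n := Ordinal HK.
  have [s2 [lK [Hs2 Hl2]]] := @BW1 (fun k => y (s k) iK) M
     (fun k => Rle_trans _ _ _ (vnorm_coord (y (s k)) iK) (Hy (s k))).
  exists (fun k => s (s2 k)), (fun i => if nat_of_ord i == K then lK else l i); split.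
    by move=> k; apply: incr_mono => //; apply: Hs2.
  move=> eps He; have [N1 HN1] := Hl eps He; have [N2 HN2] := Hl2 eps He.
  exists (maxn N1 N2) => k Hk i Hi.
  case: eqP => HiK.
  - have -> : i = iK by apply: val_inj.
    apply: HN2; lia.
  - apply: HN1; last by lia.
    have := incr_ge k Hs2; lia.
have [s [l [Hs Hl]]] := P n.
exists s, l; split => // eps He.
have Hn := pos_INR n.
set e := eps / (INR n + 1).
have He' : 0 < e by rewrite /e; apply: Rdiv_lt_0_compat; lra.
have [N HN] := Hl e He'.
exists N => k Hk; apply: norm_lt; first lra.
have Hc := @vnorm_coords n (vsub (y (s k)) l) e (Rlt_le _ _ He')
   (fun i => Rlt_le _ _ (HN k Hk i (ltn_ord i))).
apply: (Rle_lt_trans _ _ _ Hc).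
have -> : INR n * (e * e) = eps * eps * (INR n / (INR n + 1)) * / (INR n + 1).
  rewrite /e; field; lra.
have Ha : INR n / (INR n + 1) < 1.
  apply: (Rmult_lt_reg_r (INR n + 1)); first lra.
  field_simplify; lra.
have Hb : / (INR n + 1) <= 1.
  rewrite -Rinv_1; apply: Rinv_le_contravar; lra.
have Hee : 0 < eps * eps by nra.
have Hc0 : 0 <= INR n / (INR n + 1) by apply: Rle_mult_inv_pos; lra.
have Hd0 : 0 < / (INR n + 1) by apply: Rinv_0_lt_compat; lra.
have Hab : INR n / (INR n + 1) * / (INR n + 1) < 1.
  have := Rmult_le_compat_l _ _ _ Hc0 Hb; lra.
have := Rmult_lt_compat_l _ _ _ Hee Hab; lra.
Qed.

Lemma vcv_sub n (y : nat -> vec n) l s : incr s -> vcv y l -> vcv (fun k => y (s k)) l.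
Proof.
move=> Hs Hy eps He; have [N HN] := Hy eps He; exists N => k Hk.
apply: HN; have := incr_ge k Hs; lia.
Qed.

Lemma vcv_norm_le n (y : nat -> vec n) l R : (forall k, vnorm (y k) <= R) -> vcv y l -> vnorm l <= R.
Proof.
move=> Hb Hy; apply: Rnot_lt_le => Hlt.
have [N HN] := Hy (vnorm l - R) ltac:(lra).
have := HN N (leqnn N); have := vnorm_sub_le l (y N); have := Hb N.
rewrite (vnorm_subC l); lra.
Qed.

Lemma vcv_cont n (g : vec n -> vec n) y l : vcontinuous g -> vcv y l -> vcv (fun k => g (y k)) (g l).
Proof.
move=> Hg Hy eps He; have [d [Hd Hdel]] := Hg l eps He.
have [N HN] := Hy d Hd; exists N => k Hk; exact: Hdel (HN k Hk).
Qed.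

Lemma vnorm_sub2 n (x y x' y' : vec n) :
  vnorm (vsub (vsub x y) (vsub x' y')) <= vnorm (vsub x x') + vnorm (vsub y y').
Proof.
have -> : vsub (vsub x y) (vsub x' y') = vadd (vsub x x') (vscale (-1) (vsub y y')) by vext.
apply: (Rle_trans _ _ _ (vnorm_tri _ _)); rewrite vnorm_scale Rabs_Ropp Rabs_R1; lra.
Qed.

Lemma vcv_vsub n (a b : nat -> vec n) a0 b0 : vcv a a0 -> vcv b b0 ->
  vcv (fun k => vsub (a k) (b k)) (vsub a0 b0).
Proof.
move=> Ha Hb eps He.
have [N1 HN1] := Ha (eps/2) ltac:(lra); have [N2 HN2] := Hb (eps/2) ltac:(lra).
exists (maxn N1 N2) => k Hk.
have := HN1 k ltac:(lia); have := HN2 k ltac:(lia).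
have := vnorm_sub2 (a k) (b k) a0 b0; lra.
Qed.

Lemma dot_diff n (p q p' q' : vec n) :
  vdot p q - vdot p' q' = vdot (vsub p p') q + vdot p' (vsub q q').
Proof. rewrite vdot_subl vdot_subr; ring. Qed.

Lemma vcv_dot n (p q : nat -> vec n) p0 q0 : vcv p p0 -> vcv q q0 ->
  forall eps, 0 < eps -> exists N, forall k, (N <= k)%N ->
    Rabs (vdot (p k) (q k) - vdot p0 q0) < eps.
Proof.
move=> Hp Hq eps He.
set K := vnorm q0 + 1 + vnorm p0.
have HK : 1 <= K by rewrite /K; have := vnorm_ge0 q0; have := vnorm_ge0 p0; lra.
set e := Rmin 1 (eps / (2 * K)).
have He0 : 0 < e by rewrite /e; apply: Rmin_pos; [lra|apply: Rdiv_lt_0_compat; lra].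
have He1 : e <= 1 by apply: Rmin_l.
have HeK : e * K <= eps / 2.
  have : e <= eps / (2 * K) by apply: Rmin_r.
  move=> H; have := Rmult_le_compat_r K _ _ (ltac:(lra) : 0 <= K) H.
  rewrite (_ : eps / (2 * K) * K = eps / 2) //; field; lra.
have [N1 HN1] := Hp e He0; have [N2 HN2] := Hq e He0.
exists (maxn N1 N2) => k Hk.
have H1 := HN1 k ltac:(lia); have H2 := HN2 k ltac:(lia).
rewrite dot_diff.
have C1 := CS (vsub (p k) p0) (q k).
have C2 := CS p0 (vsub (q k) q0).
have Hqk := vnorm_sub_le (q k) q0.
have := Rabs_triang (vdot (vsub (p k) p0) (q k)) (vdot p0 (vsub (q k) q0)).
have := vnorm_ge0 (vsub (p k) p0); have := vnorm_ge0 (q k); have := vnorm_ge0 p0;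
have := vnorm_ge0 (vsub (q k) q0); have := vnorm_ge0 q0.
rewrite /K in HeK.
nra.
Qed.

Lemma UM n (phi : vec n -> R) g Rb eps :
  (forall z, has_gradient phi z (g z)) -> strictly_convex phi -> vcontinuous g -> 0 < eps ->
  exists c, 0 < c /\ forall a b, vnorm a <= Rb -> vnorm b <= Rb -> eps <= vnorm (vsub a b) ->
    c <= vdot (vsub (g a) (g b)) (vsub a b).
Proof.
move=> Hg Hc Hgc He.
apply: NNPP => Hn.
have Hk : forall k : nat, exists ab : vec n * vec n,
   vnorm ab.1 <= Rb /\ vnorm ab.2 <= Rb /\ eps <= vnorm (vsub ab.1 ab.2) /\
   vdot (vsub (g ab.1) (g ab.2)) (vsub ab.1 ab.2) < / (INR k + 1).
  move=> k; apply: NNPP => Hk; apply: Hn.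
  exists (/ (INR k + 1)); split; first by apply: Rinv_0_lt_compat; have := pos_INR k; lra.
  move=> a b Ha Hb Hab; apply: Rnot_lt_le => Hlt; apply: Hk; by exists (a, b).
have [ab Hab] := my_choice Hk.
have [s1 [a0 [Hs1 Ha0]]] := @BWn n (fun k => (ab k).1) Rb (fun k => proj1 (Hab k)).
have [s2 [b0 [Hs2 Hb0]]] := @BWn n (fun k => (ab (s1 k)).2) Rb (fun k => proj1 (proj2 (Hab (s1 k)))).
set s := fun k => s1 (s2 k).
have Hs : incr s by move=> k; rewrite /s; apply: incr_mono => //; apply: Hs2.
have Ha : vcv (fun k => (ab (s k)).1) a0 by apply: (vcv_sub (y := fun k => (ab (s1 k)).1)).
have Hb : vcv (fun k => (ab (s k)).2) b0 by exact: Hb0.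
have Hne : a0 <> b0.
  move=> E; rewrite -E in Hb.
  have [N1 HN1] := Ha (eps/2) ltac:(lra); have [N2 HN2] := Hb (eps/2) ltac:(lra).
  set k := maxn N1 N2.
  have := HN1 k ltac:(lia); have := HN2 k ltac:(lia).
  have := proj1 (proj2 (proj2 (Hab (s k)))).
  have := vnorm_sub_tri (ab (s k)).1 a0 (ab (s k)).2.
  rewrite (vnorm_subC a0); lra.
have Hv := strict_mono Hg Hc Hne.
set v := vdot (vsub (g a0) (g b0)) (vsub a0 b0) in Hv.
have Hp := vcv_vsub (vcv_cont Hgc Ha) (vcv_cont Hgc Hb).
have Hq := vcv_vsub Ha Hb.
have Hv2 : 0 < v / 2 by lra.
have [N1 HN1] := vcv_dot Hp Hq Hv2.
have [N2 HN2] := inv_small Hv2.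
set k := maxn N1 N2.
have := HN1 k ltac:(lia); have := HN2 (s k) ltac:(have := incr_ge k Hs; lia).
have := proj2 (proj2 (proj2 (Hab (s k)))).
move=> H1 H2 H3.
have := Rle_abs (- (vdot (vsub (g (ab (s k)).1) (g (ab (s k)).2)) (vsub (ab (s k)).1 (ab (s k)).2) - v)).
rewrite Rabs_Ropp; rewrite /v in H2 H3 Hv *; lra.
Qed.

Lemma vnorm0 n : vnorm (fun _ : 'I_n => 0) = 0.
Proof. by rewrite /vnorm vdot0r sqrt_0. Qed.

Lemma attain_min n (f : vec n -> R) R0 c :
  0 <= R0 ->
  (forall x, vnorm x <= R0 -> c <= f x) ->
  (forall x, R0 < vnorm x -> f (fun _ => 0) <= f x) ->
  (forall x eps, 0 < eps -> exists d, 0 < d /\ forall y, vnorm (vsub y x) < d -> f x < f y + eps) ->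
  exists xm, forall x, f xm <= f x.
Proof.
move=> HR Hlow Hout Hlsc.
set E := fun r => exists x, vnorm x <= R0 /\ r = - f x.
have HE1 : bound E by exists (- c) => r [x [Hx ->]]; have := Hlow x Hx; lra.
have HE2 : exists r, E r by exists (- f (fun _ => 0)), (fun _ => 0); rewrite vnorm0.
have [L [HL1 HL2]] := completeness E HE1 HE2.
set m := - L.
have Hm1 : forall x, vnorm x <= R0 -> m <= f x.
  move=> x Hx; have := HL1 (- f x) (ex_intro _ x (conj Hx erefl)); rewrite /m; lra.
have Hm2 : forall eps, 0 < eps -> exists x, vnorm x <= R0 /\ f x < m + eps.
  move=> eps He; apply: NNPP => Hn.
  have : L <= L - eps.
    apply: HL2 => r [x [Hx ->]]; apply: Rnot_lt_le => Hlt; apply: Hn.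
    exists x; split => //; rewrite /m; lra.
  lra.
have Hk : forall k : nat, exists x, vnorm x <= R0 /\ f x < m + / (INR k + 1).
  move=> k; apply: Hm2; apply: Rinv_0_lt_compat; have := pos_INR k; lra.
have [xs Hxs] := my_choice Hk.
have [s [xm [Hs Hxm]]] := @BWn n xs R0 (fun k => proj1 (Hxs k)).
have Hxm0 : vnorm xm <= R0 := vcv_norm_le (fun k => proj1 (Hxs (s k))) Hxm.
have Hfm : f xm <= m.
  apply: Rnot_lt_le => Hlt.
  have He2 : 0 < (f xm - m) / 2 by lra.
  have [d [Hd Hdel]] := Hlsc xm _ He2.
  have [N1 HN1] := Hxm d Hd.
  have [N2 HN2] := inv_small He2.
  set k := maxn N1 N2.
  have := Hdel _ (HN1 k ltac:(lia)).
  have := HN2 (s k) ltac:(have := incr_ge k Hs; lia).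
  have := proj2 (Hxs (s k)).
  lra.
exists xm => x.
case: (Rle_lt_dec (vnorm x) R0) => Hx.
- have := Hm1 x Hx; lra.
- have := Hout x Hx; have := Hm1 (fun _ => 0) ltac:(rewrite vnorm0; lra); lra.
Qed.

Lemma vsub0 n (x : vec n) : vsub x (fun _ => 0) = x.
Proof. by vext. Qed.
Lemma vsub0l n (x : vec n) : vsub (fun _ => 0) x = vscale (-1) x.
Proof. by vext. Qed.

Lemma superlin_gt n (phi : vec n -> R) M : superlinear phi ->
  exists r, 0 <= r /\ forall x, r < vnorm x -> M * vnorm x < phi x.
Proof.
move=> Hs; have [r [Hr H]] := Hs M; exists r; split => // x Hx.
have Hx0 : 0 < vnorm x by lra.
have := H x Hx; move=> Hlt.
have := Rmult_lt_compat_r _ _ _ Hx0 Hlt.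
rewrite (_ : phi x / vnorm x * vnorm x = phi x) //; field; lra.
Qed.

Lemma grad_surj n (phi : vec n -> R) g w :
  C1_with_gradient phi g -> strictly_convex phi -> superlinear phi -> exists y, g y = w.
Proof.
move=> [Hg Hgc] Hc Hs.
have [r [Hr Hsl]] := superlin_gt (vnorm w + 1) Hs.
set R0 := Rmax r (Rabs (phi (fun _ => 0))).
have HR0 : 0 <= R0 by rewrite /R0; apply: (Rle_trans _ _ _ Hr); apply: Rmax_l.
have Hw := vnorm_ge0 w; have Hg0 := vnorm_ge0 (g (fun _ => 0)).
suff [xm Hxm] : exists xm, forall x, phi xm - vdot w xm <= phi x - vdot w x.
  exists xm; apply: grad_at_min Hg _ => y; exact: Hxm.
apply: (@attain_min n (fun y => phi y - vdot w y) R0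
  (phi (fun _ => 0) - (vnorm (g (fun _ => 0)) + vnorm w) * R0) HR0).
- move=> x Hx /=.
  have := grad_ineq (fun _ => 0) x Hg Hc; rewrite vsub0 => H1.
  have H2 := vdot_le_norm w x.
  have H4 := CS (g (fun _ => 0)) x.
  have H5 := vnorm_ge0 x.
  have : - vdot (g (fun _ => 0)) x <= vnorm (g (fun _ => 0)) * vnorm x.
    have := Rle_abs (- vdot (g (fun _ => 0)) x); rewrite Rabs_Ropp; lra.
  nra.
- move=> x Hx /=.
  have Hrx : r < vnorm x by have := Rmax_l r (Rabs (phi (fun _ => 0))); rewrite -/R0; lra.
  have := Hsl x Hrx; have := vdot_le_norm w x.
  have := Rmax_r r (Rabs (phi (fun _ => 0))); rewrite -/R0 => H1.
  have := Rle_abs (phi (fun _ => 0)); rewrite vdot0r => *. nra.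
- move=> x eps He.
  have He2 : 0 < eps / 2 by lra.
  have [d1 [Hd1 H1]] := phi_cont x Hg He2.
  exists (Rmin d1 (eps / (2 * (vnorm w + 1)))); split.
    apply: Rmin_pos => //; apply: Rdiv_lt_0_compat; lra.
  move=> y Hy.
  have Hy1 : vnorm (vsub y x) < d1 by have := Rmin_l d1 (eps / (2 * (vnorm w + 1))); lra.
  have Hy2 : vnorm (vsub y x) <= eps / (2 * (vnorm w + 1)) by have := Rmin_r d1 (eps / (2 * (vnorm w + 1))); lra.
  have := H1 y Hy1.
  have Hc1 := CS w (vsub y x); rewrite vdot_subr in Hc1.
  have : vnorm w * vnorm (vsub y x) <= eps / 2.
    have := Rmult_le_compat_l _ _ _ Hw Hy2.
    have : vnorm w * (eps / (2 * (vnorm w + 1))) <= eps / 2.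
      apply: (Rmult_le_reg_r (2 * (vnorm w + 1))); first lra.
      field_simplify; try lra.
    lra.
  move=> *.
  have := Rle_abs (phi y - phi x); have := Rle_abs (- (phi y - phi x)); rewrite Rabs_Ropp.
  have := Rle_abs (vdot w y - vdot w x); have := Rle_abs (- (vdot w y - vdot w x)); rewrite Rabs_Ropp.
  lra.
Qed.

Lemma grad_bound n (phi : vec n -> R) g W :
  (forall z, has_gradient phi z (g z)) -> strictly_convex phi -> superlinear phi ->
  exists Rb, 0 <= Rb /\ forall y, vnorm (g y) <= W -> vnorm y <= Rb.
Proof.
move=> Hg Hc Hs.
have [r [Hr Hsl]] := superlin_gt (W + Rabs (phi (fun _ => 0)) + 1) Hs.
exists (Rmax r 1); split; first by have := Rmax_r r 1; lra.
move=> y Hy; apply: Rnot_lt_le => Hlt.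
have Hry : r < vnorm y by have := Rmax_l r 1; lra.
have H1y : 1 < vnorm y by have := Rmax_r r 1; lra.
have := Hsl y Hry.
have := grad_ineq y (fun _ => 0) Hg Hc; rewrite vsub0l vdot_scaler.
have := vdot_le_norm (g y) y.
have := Rle_abs (phi (fun _ => 0)).
have := Rabs_pos (phi (fun _ => 0)).
have := vnorm_ge0 (g y).
nra.
Qed.

Lemma grad_inv_cont n (phi : vec n -> R) g w eps :
  C1_with_gradient phi g -> strictly_convex phi -> superlinear phi -> 0 < eps ->
  exists d, 0 < d /\ forall y y', g y = w -> vnorm (vsub (g y') w) < d -> vnorm (vsub y' y) < eps.
Proof.
move=> [Hg Hgc] Hc Hs He.
have [Rb [HRb HRb2]] := grad_bound (vnorm w + 1) Hg Hc Hs.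
have [c [Hc0 Hc1]] := UM Rb Hg Hc Hgc He.
exists (Rmin 1 (c / (2 * Rb + 1))); split.
  apply: Rmin_pos; first lra; apply: Rdiv_lt_0_compat; lra.
move=> y y' Hy Hd; apply: Rnot_le_lt => Hge.
have Hd1 : vnorm (vsub (g y') w) < 1 by have := Rmin_l 1 (c / (2 * Rb + 1)); lra.
have Hd2 : vnorm (vsub (g y') w) < c / (2 * Rb + 1) by have := Rmin_r 1 (c / (2 * Rb + 1)); lra.
have Hy0 : vnorm y <= Rb by apply: HRb2; rewrite Hy; lra.
have Hy1 : vnorm y' <= Rb.
  apply: HRb2; have := vnorm_sub_le (g y') w; lra.
have := Hc1 y' y Hy1 Hy0 Hge.
rewrite Hy => Hcle.
have := vdot_le_norm (vsub (g y') w) (vsub y' y).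
have : vnorm (vsub y' y) <= 2 * Rb.
  have := vnorm_sub_tri y' (fun _ => 0) y; rewrite vsub0 vsub0l vnorm_scale Rabs_Ropp Rabs_R1; lra.
move=> H1 H2.
have : (2 * Rb + 1) * vnorm (vsub (g y') w) < c.
  have Hp : 0 < 2 * Rb + 1 by lra.
  have := Rmult_lt_compat_l _ _ _ Hp Hd2.
  rewrite (_ : (2 * Rb + 1) * (c / (2 * Rb + 1)) = c) //; field; lra.
have := vnorm_ge0 (vsub (g y') w).
have := vnorm_ge0 (vsub y' y).
nra.
Qed.

Lemma mxv_add n m (A : mat n m) x y : mxv A (vadd x y) = vadd (mxv A x) (mxv A y).
Proof.
apply: functional_extensionality => i; rewrite /mxv /vadd -sumD.
apply: eq_bigr => j _; ring.
Qed.

Lemma mxv0 n m (A : mat n m) : mxv A (fun _ => 0) = (fun _ => 0).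
Proof.
apply: functional_extensionality => i; rewrite /mxv big1 // => j _; ring.
Qed.

Lemma vdot0l n (x : vec n) : vdot (fun _ => 0) x = 0.
Proof. by rewrite vdotC vdot0r. Qed.

Lemma fenchel n (phi : vec n -> R) g y w :
  (forall z, has_gradient phi z (g z)) -> strictly_convex phi -> g y = w ->
  forall y', vdot y' w - phi y' <= vdot y w - phi y.
Proof.
move=> Hg Hc Hy y'; have := grad_ineq y y' Hg Hc; rewrite Hy vdot_subr (vdotC w y') (vdotC w y); lra.
Qed.

Lemma exists_zero n (phi : vec n -> R) g J :
  C1_with_gradient phi g -> strictly_convex phi -> superlinear phi -> skew J ->
  exists x, g x = mxv J x.
Proof.
move=> HC Hc Hs HJ; have [Hg Hgc] := HC.
have [Y HY] := my_choice (fun w => grad_surj w HC Hc Hs).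
set h := fun x => phi x + vdot (Y (mxv J x)) (mxv J x) - phi (Y (mxv J x)).
have Hh : forall x y, phi x + vdot y (mxv J x) - phi y <= h x.
  move=> x y; have := fenchel Hg Hc (HY (mxv J x)) y; rewrite /h; lra.
have [r [Hr Hsl]] := superlin_gt 1 Hs.
set R0 := Rmax r (Rabs (h (fun _ => 0)) + Rabs (phi (fun _ => 0))).
have HR0 : 0 <= R0 by rewrite /R0; apply: (Rle_trans _ _ _ Hr); apply: Rmax_l.
have Hg0 := vnorm_ge0 (g (fun _ => 0)).
have [xb Hxb] : exists xb, forall x, h xb <= h x.
  apply: (@attain_min n h R0 (phi (fun _ => 0) - phi (fun _ => 0) - vnorm (g (fun _ => 0)) * R0) HR0).
  - move=> x Hx.
    have := Hh x (fun _ => 0); rewrite vdot0l.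
    have := grad_ineq (fun _ => 0) x Hg Hc; rewrite vsub0.
    have := CS (g (fun _ => 0)) x; have := Rle_abs (- vdot (g (fun _ => 0)) x); rewrite Rabs_Ropp.
    have := vnorm_ge0 x.
    nra.
  - move=> x Hx.
    have Hrx : r < vnorm x by have := Rmax_l r (Rabs (h (fun _ => 0)) + Rabs (phi (fun _ => 0))); rewrite -/R0; lra.
    have := Rmax_r r (Rabs (h (fun _ => 0)) + Rabs (phi (fun _ => 0))); rewrite -/R0.
    have := Hsl x Hrx; have := Hh x (fun _ => 0); rewrite vdot0l.
    have := Rle_abs (h (fun _ => 0)); have := Rle_abs (phi (fun _ => 0)).
    move=> *; clearbody h R0; lra.
  - move=> x eps He.
    set yb := Y (mxv J x).
    have He2 : 0 < eps / 2 by lra.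
    have [d1 [Hd1 H1]] := phi_cont x Hg He2.
    set K := vnorm (mxv J yb) + 1.
    have HK : 0 < K by rewrite /K; have := vnorm_ge0 (mxv J yb); lra.
    exists (Rmin d1 (eps / (2 * K))); split.
      apply: Rmin_pos => //; apply: Rdiv_lt_0_compat; lra.
    move=> z Hz.
    have Hz1 : vnorm (vsub z x) < d1 by have := Rmin_l d1 (eps / (2 * K)); lra.
    have Hz2 : vnorm (vsub z x) <= eps / (2 * K) by have := Rmin_r d1 (eps / (2 * K)); lra.
    have Ex : h x = phi x + vdot yb (mxv J x) - phi yb by [].
    have := Hh z yb.
    have := H1 z Hz1.
    have E2 : vdot yb (mxv J z) - vdot yb (mxv J x) = - vdot (mxv J yb) (vsub z x).
      by rewrite -vdot_subr -mxv_sub skew_adj.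
    have := CS (mxv J yb) (vsub z x).
    have : vnorm (mxv J yb) * vnorm (vsub z x) <= eps / 2.
      have Hj := vnorm_ge0 (mxv J yb).
      have := Rmult_le_compat_l _ _ _ Hj Hz2.
      have : vnorm (mxv J yb) * (eps / (2 * K)) <= eps / 2.
        apply: (Rmult_le_reg_r (2 * K)); first lra.
        field_simplify; rewrite /K; try lra.
      lra.
    have := Rle_abs (vdot (mxv J yb) (vsub z x)).
    have := Rle_abs (- (phi z - phi x)); rewrite Rabs_Ropp.
    rewrite Ex; lra.
set yb := Y (mxv J xb).
have Hyb : g yb = mxv J xb := HY _.
(* first-order condition *)
have Hfo : g xb = mxv J yb.
  set d := vsub (mxv J yb) (g xb).
  suff Hd : vnorm d = 0.
    apply: functional_extensionality => i.
    have := f_equal (fun v => v i) (vnorm_eq0 Hd); rewrite /d /vsub /=; lra.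
  have Hd0 := vnorm_ge0 d.
  apply: Rle_antisym => //; apply: Rnot_lt_le => Hpos.
  set Jd := mxv J d.
  have HJd := vnorm_ge0 Jd.
  have He1 : 0 < vnorm d / 4 by lra.
  have [d1 [Hd1 H1]] := Hg xb _ He1.
  have He2 : 0 < vnorm d * vnorm d / (4 * (vnorm Jd + 1)).
    apply: Rdiv_lt_0_compat; nra.
  have [d2 [Hd2 H2]] := grad_inv_cont (mxv J xb) HC Hc Hs He2.
  set t := Rmin (d1 / (2 * (vnorm d + 1))) (d2 / (2 * (vnorm Jd + 1))).
  have Ht : 0 < t by rewrite /t; apply: Rmin_pos; apply: Rdiv_lt_0_compat; lra.
  have Ht1 : t * vnorm d < d1.
    have : t <= d1 / (2 * (vnorm d + 1)) by apply: Rmin_l.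
    move=> Hle; have : d1 / (2 * (vnorm d + 1)) * vnorm d < d1.
      have -> : d1 / (2 * (vnorm d + 1)) * vnorm d = d1 * (vnorm d / (2 * (vnorm d + 1))) by field; lra.
      have : vnorm d / (2 * (vnorm d + 1)) < 1.
        apply: (Rmult_lt_reg_r (2 * (vnorm d + 1))); first lra.
        field_simplify; lra.
      move=> ?; nra.
    nra.
  have Ht2 : t * vnorm Jd < d2.
    have : t <= d2 / (2 * (vnorm Jd + 1)) by apply: Rmin_r.
    move=> Hle; have : d2 / (2 * (vnorm Jd + 1)) * vnorm Jd < d2.
      have -> : d2 / (2 * (vnorm Jd + 1)) * vnorm Jd = d2 * (vnorm Jd / (2 * (vnorm Jd + 1))) by field; lra.
      have : vnorm Jd / (2 * (vnorm Jd + 1)) < 1.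
        apply: (Rmult_lt_reg_r (2 * (vnorm Jd + 1))); first lra.
        field_simplify; lra.
      move=> ?; nra.
    nra.
  set xt := vadd xb (vscale t d).
  set yt := Y (mxv J xt).
  have EJ : mxv J xt = vadd (mxv J xb) (vscale t Jd) by rewrite /xt mxv_add mxv_scale.
  (* 0 <= h xt - h xb <= phi xt - phi xb + t <yt, Jd> *)
  have Hmin := Hxb xt.
  have Hlow := Hh xb yt.
  have Ext : h xt = phi xt + vdot yt (mxv J xt) - phi yt by [].
  rewrite EJ vdot_addr vdot_scaler in Ext.
  have := H1 (vscale t d); rewrite vnorm_scale Rabs_pos_eq; last lra.
  move=> /(_ Ht1); rewrite vdot_scaler -/xt => Hgr.
  have Hgr2 := Rle_abs (phi xt - phi xb - t * vdot (g xb) d).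
  have Hyt : vnorm (vsub yt yb) < vnorm d * vnorm d / (4 * (vnorm Jd + 1)).
    apply: H2 => //; rewrite HY EJ.
    have -> : vsub (vadd (mxv J xb) (vscale t Jd)) (mxv J xb) = vscale t Jd by vext.
    rewrite vnorm_scale Rabs_pos_eq; lra.
  have E3 : vdot yt Jd = vdot yb Jd + vdot (vsub yt yb) Jd by rewrite vdot_subl; ring.
  have E4 : vdot yb Jd = - vdot (mxv J yb) d by rewrite /Jd skew_adj.
  have Hc3 := vdot_le_norm (vsub yt yb) Jd.
  have Hdd : vdot (g xb) d - vdot (mxv J yb) d = - (vnorm d * vnorm d).
    by rewrite vnorm_sq /d vdot_subl vdot_subr vdot_subr (vdotC (g xb) (mxv J yb)); ring.
  have Hb : vnorm (vsub yt yb) * vnorm Jd <= vnorm d * vnorm d / 4.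
    have Hn := vnorm_ge0 (vsub yt yb).
    have : vnorm d * vnorm d / (4 * (vnorm Jd + 1)) * vnorm Jd <= vnorm d * vnorm d / 4.
      apply: (Rmult_le_reg_r (4 * (vnorm Jd + 1))); first lra.
      field_simplify; try lra.
      have := Rmult_le_pos _ _ (Rmult_le_pos _ _ Hd0 Hd0) HJd; nra.
    nra.
  have Hsum : 0 <= t * (vdot (g xb) d - vdot (mxv J yb) d) + t * (vnorm d / 4 * vnorm d) + t * (vnorm (vsub yt yb) * vnorm Jd).
    rewrite /h in Hmin Hlow; rewrite /h -/yt in Ext.
    rewrite Ext in Hmin.
    have : t * vdot yt Jd <= t * (vdot yb Jd + vnorm (vsub yt yb) * vnorm Jd).
      apply: Rmult_le_compat_l; lra.
    rewrite -/yb in Hmin Hlow *.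
    have E5 : t * vdot yb Jd = - (t * vdot (mxv J yb) d) by rewrite E4; ring.
    move=> HH; lra.
  rewrite Hdd in Hsum.
  have : t * (vnorm (vsub yt yb) * vnorm Jd) <= t * (vnorm d * vnorm d / 4) by apply: Rmult_le_compat_l; lra.
  have := Rmult_lt_0_compat _ _ Ht (Rmult_lt_0_compat _ _ Hpos Hpos).
  lra.
case: (classic (xb = yb)) => [Exy|Hne].
  by exists xb; rewrite Hfo -Exy.
have := strict_mono Hg Hc Hne.
rewrite Hfo Hyb -mxv_sub.
have -> : vsub yb xb = vscale (-1) (vsub xb yb) by vext.
rewrite mxv_scale vdot_scalel vdotC skew_self //; lra.
Qed.

Lemma deriv_sum_seq n (r : seq 'I_n) (P : pred 'I_n) (f : 'I_n -> R -> R) f' t :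
  (forall i, derivable_pt_lim (f i) t (f' i)) ->
  derivable_pt_lim (fun s => \big[Rplus/0]_(i <- r | P i) f i s) t (\big[Rplus/0]_(i <- r | P i) f' i).
Proof.
move=> Hf; elim: r => [|a r IH].
  have -> : (fun s => \big[Rplus/0]_(i <- [::] | P i) f i s) = fct_cte 0.
    by apply: functional_extensionality => s; rewrite big_nil.
  rewrite big_nil; exact: derivable_pt_lim_const.
have -> : (fun s => \big[Rplus/0]_(i <- a :: r | P i) f i s) =
   (fun s => (if P a then f a s else 0) + \big[Rplus/0]_(i <- r | P i) f i s).
  apply: functional_extensionality => s; rewrite big_cons; case: (P a) => //; ring.
rewrite big_cons.
case: (P a).
- exact: (derivable_pt_lim_plus _ _ _ _ _ (Hf a) IH).
- rewrite -[X in derivable_pt_lim _ _ X]Rplus_0_l.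
  exact: (derivable_pt_lim_plus _ _ _ _ _ (derivable_pt_lim_const 0 t) IH).
Qed.

Lemma deriv_V n (x : R -> vec n) (xs : vec n) (xd : vec n) t :
  (forall i, derivable_pt_lim (fun s => x s i) t (xd i)) ->
  derivable_pt_lim (fun s => vdot (vsub (x s) xs) (vsub (x s) xs)) t
     (2 * vdot (vsub (x t) xs) xd).
Proof.
move=> Hx.
have -> : 2 * vdot (vsub (x t) xs) xd =
  \S_(i < n) ((xd i - 0) * (x t i - xs i) + (x t i - xs i) * (xd i - 0)).
  rewrite /vdot -sumZ; apply: eq_bigr => i _; rewrite /vsub; ring.
apply: (@deriv_sum_seq n _ _ (fun i s => (x s i - xs i) * (x s i - xs i))) => i.
have Hd : derivable_pt_lim (fun s => x s i - xs i) t (xd i - 0).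
  exact: (derivable_pt_lim_minus _ _ _ _ _ (Hx i) (derivable_pt_lim_const (xs i) t)).
exact: (derivable_pt_lim_mult _ _ _ _ _ Hd Hd).
Qed.

Lemma mono n (phi : vec n -> R) g x y :
  (forall z, has_gradient phi z (g z)) -> strictly_convex phi ->
  0 <= vdot (vsub (g x) (g y)) (vsub x y).
Proof.
move=> Hg Hc.
have H1 := grad_ineq x y Hg Hc; have H2 := grad_ineq y x Hg Hc.
move: H1 H2; rewrite !vdot_subl !vdot_subr; lra.
Qed.

Unset Implicit Arguments.

Theorem mainTheorem11 (n m : nat) (psi : vec n -> R) (grad : vec n -> vec n)
    (J : mat n n) (B : mat n m) (u : vec m) :
  C1_with_gradient psi grad ->
  strictly_convex psi ->
  superlinear psi ->
  skew J ->
  exists x0 : vec n,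
    (forall (t0 : R) (x : R -> vec n), is_solution grad J B u t0 x -> converges_to x x0) /\
    (forall y0 : vec n,
       (forall (t0 : R) (x : R -> vec n), is_solution grad J B u t0 x -> converges_to x y0) ->
       y0 = x0).
Proof.
move=> HC Hc Hs HJ.
have [Hg Hgc] := HC.
set b := mxv B u.
set phi := fun x => psi x - vdot b x.
set gp := fun x => vsub (grad x) b.
have HCp : C1_with_gradient phi gp.
  split.
  - move=> x eps He; have [d [Hd H]] := Hg x eps He; exists d; split => // h Hh.
    have -> : phi (vadd x h) - phi x - vdot (gp x) h = psi (vadd x h) - psi x - vdot (grad x) h.
      rewrite /phi /gp vdot_addr vdot_subl (vdotC b h); ring.
    exact: H.
  - move=> x eps He; have [d [Hd H]] := Hgc x eps He; exists d; split => // y Hy.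
    have -> : vsub (gp y) (gp x) = vsub (grad y) (grad x) by rewrite /gp; vext.
    exact: H.
have Hcp : strictly_convex phi.
  move=> x y Hxy l Hl; have := Hc x y Hxy l Hl; rewrite /phi vdot_addr !vdot_scaler; lra.
have Hsp : superlinear phi.
  move=> M; have [r [Hr H]] := superlin_gt (M + vnorm b) Hs.
  exists r; split => // x Hx.
  have Hx0 : 0 < vnorm x by lra.
  have H1 := H x Hx; have H2 := vdot_le_norm b x.
  apply: (Rmult_lt_reg_r (vnorm x)) => //.
  rewrite (_ : phi x / vnorm x * vnorm x = phi x); last by field; lra.
  rewrite /phi; lra.
have [xs Hxs] := exists_zero HCp Hcp Hsp HJ.
have Heq : forall i, - grad xs i + mxv J xs i + mxv B u i = 0.
  move=> i; have := f_equal (fun v => v i) Hxs; rewrite /gp /vsub /b /=; lra.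
exists xs; split.
- move=> t0 x Hsol eps He.
  set V := fun s => vdot (vsub (x s) xs) (vsub (x s) xs).
  set D := fun t => - 2 * vdot (vsub (grad (x t)) (grad xs)) (vsub (x t) xs).
  have HV : forall t, t0 < t -> derivable_pt_lim V t (D t).
    move=> t Ht.
    have E : (fun i => - grad (x t) i + mxv J (x t) i + mxv B u i) =
        vadd (vscale (-1) (vsub (grad (x t)) (grad xs))) (mxv J (vsub (x t) xs)).
      rewrite mxv_sub; apply: functional_extensionality => i.
      have := Heq i; rewrite /vadd /vscale /vsub; lra.
    have HD : D t = 2 * vdot (vsub (x t) xs) (fun i => - grad (x t) i + mxv J (x t) i + mxv B u i).
      rewrite E vdot_addr vdot_scaler skew_self // (vdotC (vsub (x t) xs)) /D; ring.
    rewrite HD; exact: deriv_V (Hsol t Ht).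
  have HV0 : forall t, D t <= 0.
    move=> t; rewrite /D; have := mono (x t) xs Hg Hc. 
    lra.
  have Hdec : forall a c, t0 < a -> a <= c -> V c <= V a.
    move=> a c Ha Hac; case: (Req_dec a c) => [->|Hne]; first lra.
    have [z [Hz1 Hz2]] := MVT_cor2 V D a c ltac:(lra) (fun z Hz => HV z ltac:(lra)).
    have := HV0 z; nra.
  set t1 := t0 + 1.
  set Rb := vnorm (vsub (x t1) xs).
  have Hball : forall t, t1 <= t -> vnorm (vsub (x t) xs) <= Rb.
    move=> t Ht; rewrite /Rb /vnorm; apply: sqrt_le_1_alt; apply: Hdec; rewrite /t1 in Ht *; lra.
  have [T [HT1 HT2]] : exists T, t1 <= T /\ vnorm (vsub (x T) xs) < eps.
    apply: NNPP => Hn.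
    have Hge : forall t, t1 <= t -> eps <= vnorm (vsub (x t) xs).
      move=> t Ht; apply: Rnot_lt_le => Hlt; apply: Hn; by exists t.
    have [c [Hc0 Hc1]] := UM (Rb + vnorm xs) Hg Hc Hgc He.
    have HRb : 0 <= Rb := vnorm_ge0 _.
    have Hd : forall t, t1 <= t -> D t <= -2 * c.
      move=> t Ht.
      have Hx1 : vnorm (x t) <= Rb + vnorm xs.
        have := vnorm_sub_le (x t) xs; have := Hball t Ht; lra.
      have Hx2 : vnorm xs <= Rb + vnorm xs by lra.
      have := Hc1 (x t) xs Hx1 Hx2 (Hge t Ht).
      rewrite /D; lra.
    have HVt1 : 0 <= V t1 := vdot_ge0 _.
    set s := V t1 / (2 * c) + 1.
    have Hs1 : 0 <= V t1 / (2 * c) by apply: Rle_mult_inv_pos; lra.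
    have Hs0 : 0 < s by rewrite /s; lra.
    have Hcs : 2 * c * s = V t1 + 2 * c by rewrite /s; field; lra.
    have [z [Hz1 Hz2]] := MVT_cor2 V D t1 (t1 + s) ltac:(lra)
       (fun z Hz => HV z ltac:(rewrite /t1 in Hz *; lra)).
    have Hdz := Hd z ltac:(lra).
    have := Rmult_le_compat_r s _ _ (Rlt_le _ _ Hs0) Hdz.
    have : 0 <= V (t1 + s) := vdot_ge0 _.
    lra.
  exists T => t Ht.
  have := Hdec T t ltac:(rewrite /t1 in HT1; lra) Ht.
  move=> HVt.
  have : vnorm (vsub (x t) xs) <= vnorm (vsub (x T) xs) by apply: sqrt_le_1_alt.
  lra.
- move=> y0 Hy0.
  have Hsol : is_solution grad J B u 0 (fun _ => xs).
    move=> t _ i; rewrite Heq; exact: derivable_pt_lim_const.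
  have Hcv := Hy0 0 _ Hsol.
  have Hz : vnorm (vsub xs y0) = 0.
    apply: Rle_antisym; last exact: vnorm_ge0.
    apply: Rnot_lt_le => Hp; have [T HT] := Hcv _ Hp; have := HT T (Rle_refl T); lra.
  apply: functional_extensionality => i; have := f_equal (fun v => v i) (vnorm_eq0 Hz).
  rewrite /vsub /=; lra.
Qed.
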